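(* Let $n\ge 2$, $d\ge 2$, let $\{1,\dots,n\}=\beta\,\dot\cup\,\overline{\beta}$ be a bipartition into nonempty sets with $k_1=|\beta|$, $k_2=|\overline{\beta}|$ (so $k_1+k_2=n$), and let $x$ be an integer. For every state $\rho$ on $(\mathbb{C}^d)^{\otimes n}$ that is separable with respect to the bipartition $(\beta|\overline{\beta})$, $$\mathcal{C}_x(\rho)\le (d^{k_1}-1)(d^{k_2}-1)+\sum_{j\in\{1,2\}:\,k_j\ge x}(d^{k_j}-1).$$
   Context: Consider $n$ qudits with Hilbert space $(\mathbb{C}^d)^{\otimes n}$. Let $\lambda_0=\mathbb{1}_d$ and let $\lambda_1,\dots,\lambda_{d^2-1}$ be Hermitian traceless $d\times d$ matrices normalized so that $\mathrm{Tr}[\lambda_i\lambda_j]=d\,\delta_{ij}$. For a nonempty subset $\alpha\subseteq\{1,\dots,n\}$ and a state $\rho$ with reduced state $\rho_\alpha$, define $\|\tau_\alpha(\rho)\|^2=\sum_{(i_k)_{k\in\alpha}\in\{1,\dots,d^2-1\}^{\alpha}}\big(\mathrm{Tr}[\rho_\alpha\bigotimes_{k\in\alpha}\lambda_{i_k}]\big)^2$. For a real number $x$ define $\mathcal{C}_x(\rho)=\sum_{\alpha\neq\emptyset,\ |\alpha|\ge x}\|\tau_\alpha(\rho)\|^2$. A state is separable with respect to the bipartition $(\beta|\overline{\beta})$ if it is a convex combination of pure states of the form $|\phi\rangle_\beta\otimes|\chi\rangle_{\overline{\beta}}$. *)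

(* Defs.v *)
From HB Require Import structures.
From mathcomp Require Import all_boot all_order all_algebra all_field.
Set Implicit Arguments. Unset Strict Implicit. Unset Printing Implicit Defensive.
Import Order.TTheory GRing.Theory Num.Theory.
Local Open Scope ring_scope.

(* Computational basis labels of (C^d)^{\otimes n}: x : 'I_n -> 'I_d. *)
Definition basis_idx (n d : nat) := {ffun 'I_n -> 'I_d}.

(* Operators on (C^d)^{\otimes n}, as kernels (matrix entries). *)
Definition op (n d : nat) := basis_idx n d -> basis_idx n d -> algC.

Definition tensor_op (n d : nat) (mu : 'I_n -> 'M[algC]_d) : op n d :=
  fun x y => \prod_(k < n) mu k (x k) (y k).

Definition tr_mul (n d : nat) (rho A : op n d) : algC :=
  \sum_(x : basis_idx n d) \sum_(y : basis_idx n d) rho x y * A y x.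

Definition gm_basis (d : nat) (lam : 'I_(d ^ 2 - 1) -> 'M[algC]_d) : Prop :=
  [/\ forall a i j, lam a j i = (lam a i j)^*,
      forall a, \tr (lam a) = 0
    & forall a b, \tr (lam a *m lam b) = d%:R * (a == b)%:R].

(* Tr[rho_alpha (x)_{k in alpha} lambda_{i_k}]
   = Tr[rho ((x)_{k in alpha} lambda_{i_k} (x) 1_{complement})]. *)
Definition site_op (n d : nat) (lam : 'I_(d ^ 2 - 1) -> 'M[algC]_d)
  (alpha : {set 'I_n}) (i : {ffun {k : 'I_n | k \in alpha} -> 'I_(d ^ 2 - 1)})
  (k : 'I_n) : 'M[algC]_d :=
  match (insub k : option {k : 'I_n | k \in alpha}) with
  | Some k' => lam (i k')
  | None => 1%:M
  end.

Definition tau_norm2 (n d : nat) (lam : 'I_(d ^ 2 - 1) -> 'M[algC]_d)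
  (alpha : {set 'I_n}) (rho : op n d) : algC :=
  \sum_(i : {ffun {k : 'I_n | k \in alpha} -> 'I_(d ^ 2 - 1)})
     (tr_mul rho (tensor_op (site_op lam i))) ^+ 2.

Definition Cx (n d : nat) (lam : 'I_(d ^ 2 - 1) -> 'M[algC]_d) (x : int)
  (rho : op n d) : algC :=
  \sum_(alpha : {set 'I_n} | (alpha != set0) && (x <= (#|alpha|)%:Z)%R)
     tau_norm2 lam alpha rho.

(* A vector on the full space that only depends on the coordinates in S,
   i.e. a vector of the subsystem S (identified with its tensor with
   the uniform pattern on the complement). *)
Definition depends_only_on (n d : nat) (S : {set 'I_n})
  (phi : basis_idx n d -> algC) : Prop :=
  forall x y : basis_idx n d, (forall k, k \in S -> x k = y k) -> phi x = phi y.

Definition separable_bip (n d : nat) (beta : {set 'I_n}) (rho : op n d) : Prop :=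
  exists (m : nat) (p : 'I_m -> algC)
         (phi chi : 'I_m -> basis_idx n d -> algC),
    [/\ (forall j, 0 <= p j) /\ \sum_(j < m) p j = 1,
        forall j, depends_only_on beta (phi j),
        forall j, depends_only_on (setC beta) (chi j),
        forall j, \sum_(x : basis_idx n d) `|phi j x * chi j x| ^+ 2 = 1
      & forall x y, rho x y =
          \sum_(j < m) p j * ((phi j x * chi j x) * (phi j y * chi j y)^*)].

(* Main.v *)
Require Import Defs.
From mathcomp Require Import all_boot all_order all_algebra all_field.
From mathcomp Require Import ring.
Import Order.TTheory GRing.Theory Num.Theory.
Local Open Scope ring_scope.
Set Implicit Arguments. Unset Strict Implicit. Unset Printing Implicit Defensive.

Lemma bessel (T I : finType) (P : pred I) (b : I -> T -> algC) (r : T -> algC) (c : algC) :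
  0 < c -> (forall i j, P i -> P j -> \sum_p (b i p)^* * b j p = c * (i == j)%:R) ->
  \sum_(i | P i) `|\sum_p (b i p)^* * r p| ^+ 2 <= c * \sum_p `|r p| ^+ 2.
Proof.
move=> c0 Hb.
set a := fun i => \sum_p (b i p)^* * r p.
set s := \sum_(i | P i) `|a i| ^+ 2.
set v := fun p => c^-1 * \sum_(i | P i) a i * b i p.
have cR : c^* = c by apply/CrealP; exact: gtr0_real.
have cV : c^-1^* = c^-1 by apply/CrealP; rewrite rpredV; exact: gtr0_real.
have sR : s^* = s by apply/CrealP; apply: ger0_real; apply: sumr_ge0 => i _; apply: exprn_ge0.
have aK : forall i, \sum_p b i p * (r p)^* = (a i)^*.
  by move=> i; rewrite /a rmorph_sum; apply: eq_bigr => p _; rewrite rmorphM /= conjCK.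
have h1 : \sum_p v p * (r p)^* = c^-1 * s.
  transitivity (c^-1 * \sum_(i | P i) \sum_p a i * (b i p * (r p)^*)).
    rewrite exchange_big big_distrr /=; apply: eq_bigr => p _.
    rewrite /v -mulrA big_distrl /=; congr (_ * _); apply: eq_bigr => i _.
    by rewrite mulrA.
  congr (_ * _); apply: eq_bigr => i _.
  by rewrite -big_distrr /= aK normCK.
have h2 : \sum_p r p * (v p)^* = c^-1 * s.
  have e : (c^-1 * s)^* = c^-1 * s by rewrite rmorphM /= cV sR.
  rewrite -e -h1 rmorph_sum; apply: eq_bigr => p _.
  by rewrite /= [RHS]rmorphM /= conjCK mulrC.
have h3 : \sum_p v p * (v p)^* = c^-1 * s.
  transitivity (\sum_p c^-1 * (\sum_(i | P i) a i * b i p) * (c^-1 * \sum_(j | P j) (a j)^* * (b j p)^*)).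
    apply: eq_bigr => p _; congr (_ * _).
    rewrite /v rmorphM /= cV rmorph_sum /=; congr (_ * _).
    by apply: eq_bigr => j _; rewrite rmorphM.
  transitivity (c^-1 * c^-1 * \sum_p \sum_(i | P i) \sum_(j | P j) a i * (a j)^* * ((b j p)^* * b i p)).
    rewrite big_distrr; apply: eq_bigr => p _.
    rewrite mulrACA; congr (_ * _); rewrite big_distrl; apply: eq_bigr => i _.
    rewrite big_distrr; apply: eq_bigr => j _ /=. ring.
  transitivity (c^-1 * c^-1 * \sum_(i | P i) (a i * (a i)^* * c)).
    congr (_ * _); rewrite exchange_big; apply: eq_bigr => i Pi.
    rewrite exchange_big (bigD1 i) //= [X in _ + X]big1 ?addr0.
      by rewrite -big_distrr /= Hb // eqxx mulr1.
    move=> j /andP[Pj nji]; rewrite -big_distrr /= Hb // (negbTE nji).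
    by rewrite mulr0 mulr0.
  rewrite -big_distrl /=.
  have -> : \sum_(i | P i) a i * (a i)^* = s by apply: eq_bigr => i _; rewrite normCK.
  by field; rewrite lt0r_neq0.
have hw : \sum_p `|r p - v p| ^+ 2 = \sum_p `|r p| ^+ 2 - c^-1 * s.
  under eq_bigr do rewrite normCK rmorphB /= mulrBl !mulrBr.
  rewrite !sumrB h1 h2 h3.
  under eq_bigr do rewrite -normCK.
  by rewrite subrr subr0.
have : 0 <= \sum_p `|r p| ^+ 2 - c^-1 * s by rewrite -hw sumr_ge0 // => p _; rewrite exprn_ge0.
rewrite subr_ge0 ler_pdivrMl //.
Qed.

Lemma jensen (m : nat) (p a : 'I_m -> algC) : (forall j, 0 <= p j) -> \sum_j p j = 1 ->
  (forall j, a j \is Num.real) -> (\sum_j p j * a j) ^+ 2 <= \sum_j p j * a j ^+ 2.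
Proof.
move=> p0 p1 aR.
set M := \sum_j p j * a j.
have MR : M \is Num.real by apply: rpred_sum => j _; apply: rpredM; [apply: ger0_real|].
have : 0 <= \sum_j p j * (a j - M) ^+ 2.
  by apply: sumr_ge0 => j _; rewrite mulr_ge0 // -realEsqr rpredB.
have -> : \sum_j p j * (a j - M) ^+ 2 = \sum_j p j * a j ^+ 2 - (M *+ 2) * M + M ^+ 2 * \sum_j p j.
  transitivity (\sum_j (p j * a j ^+ 2 - (M *+ 2) * (p j * a j) + M ^+ 2 * p j)).
    by apply: eq_bigr => j _; ring.
  by rewrite big_split sumrB /= -!big_distrr.
have -> : \sum_j p j * a j ^+ 2 - M *+ 2 * M + M ^+ 2 * \sum_j p j = \sum_j p j * a j ^+ 2 - M ^+ 2.
  by rewrite p1; ring.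
by rewrite subr_ge0.
Qed.

Definition mJ (d : nat) (lam : 'I_(d ^ 2 - 1) -> 'M[algC]_d) (o : option 'I_(d ^ 2 - 1)) : 'M[algC]_d :=
  if o is Some a then lam a else 1%:M.
Definition Jt (n d : nat) := {ffun 'I_n -> option 'I_(d ^ 2 - 1)}.
Definition tJ (n d : nat) (lam : 'I_(d ^ 2 - 1) -> 'M[algC]_d) (rho : op n d) (J : Jt n d) : algC :=
  tr_mul rho (tensor_op (fun k => mJ lam (J k))).
Definition mrg (n : nat) (A : finType) (S : {set 'I_n}) (s t : {ffun 'I_n -> A}) : {ffun 'I_n -> A} :=
  [ffun k => if k \in S then s k else t k].
Definition J0 (n d : nat) : Jt n d := [ffun _ => None].
Definition prodS (n d : nat) (lam : 'I_(d ^ 2 - 1) -> 'M[algC]_d) (S : {set 'I_n}) (J : Jt n d)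
  (y x : basis_idx n d) : algC := \prod_(k in S) mJ lam (J k) (y k) (x k).
Definition pmrg (n d : nat) (S : {set 'I_n}) (p q : basis_idx n d * basis_idx n d) :=
  (mrg S p.1 q.1, mrg S p.2 q.2).

Lemma mrgK n (A : finType) (S : {set 'I_n}) (s t : {ffun 'I_n -> A}) :
  mrg S (mrg S s t) (mrg S t s) = s.
Proof. by apply/ffunP => k; rewrite !ffunE; case: (k \in S). Qed.

Lemma pmrgK n d S (p q : basis_idx n d * basis_idx n d) : pmrg S (pmrg S p q) (pmrg S q p) = p.
Proof. by case: p q => [p1 p2] [q1 q2]; rewrite /pmrg /= !mrgK. Qed.

Lemma mrg_dep n d S (f : basis_idx n d -> algC) s t :
  depends_only_on S f -> f (mrg S s t) = f s.
Proof. by move=> H; apply: H => k kS; rewrite ffunE kS. Qed.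

Lemma mrg_depC n d S (f : basis_idx n d -> algC) s t :
  depends_only_on (~: S) f -> f (mrg S s t) = f t.
Proof. by move=> H; apply: H => k; rewrite in_setC ffunE => /negbTE ->. Qed.

Lemma prodS_mrg n d lam S (J : Jt n d) y y' x x' :
  prodS lam S J (mrg S y y') (mrg S x x') = prodS lam S J y x.
Proof. by apply: eq_bigr => k kS; rewrite !ffunE kS. Qed.

Lemma prodS_mrgC n d lam S (J : Jt n d) y y' x x' :
  prodS lam (~: S) J (mrg S y y') (mrg S x x') = prodS lam (~: S) J y' x'.
Proof. by apply: eq_bigr => k; rewrite in_setC !ffunE => /negbTE ->. Qed.

Lemma tensor_split n d lam S (J : Jt n d) y x :
  tensor_op (fun k => mJ lam (J k)) y x = prodS lam S J y x * prodS lam (~: S) J y x.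
Proof.
rewrite /tensor_op /prodS (bigID (fun k => k \in S)) /=; congr (_ * _).
by apply: eq_bigl => k; rewrite in_setC.
Qed.

Lemma tr_pair n d (rho A : op n d) :
  tr_mul rho A = \sum_(p : basis_idx n d * basis_idx n d) rho p.1 p.2 * A p.2 p.1.
Proof. by rewrite /tr_mul pair_bigA. Qed.

Lemma merge_sum (T : finType) (m : T -> T -> T) (f g : T -> algC) :
  (forall s t, m (m s t) (m t s) = s) ->
  (forall s t, f (m s t) = f s) -> (forall s t, g (m s t) = g t) ->
  (\sum_s f s) * (\sum_t g t) = #|T|%:R * \sum_s f s * g s.
Proof.
move=> Hm Hf Hg.
rewrite big_distrl /=. under eq_bigr do rewrite big_distrr /=.
rewrite pair_bigA /=.
set sig := fun p : T * T => (m p.1 p.2, m p.2 p.1).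
have sigK : involutive sig by move=> [s t]; rewrite /sig /= !Hm.
transitivity (\sum_(p : T * T) (f (sig p).1 * g (sig p).1)).
  by apply: eq_bigr => p _; rewrite /= Hf Hg.
rewrite -(@reindex_inj _ _ _ _ _ xpredT (fun p => f p.1 * g p.1) (inv_inj sigK)) /=.
rewrite -(pair_bigA _ (fun s t => f s * g s)) /= mulr_natl -sumr_const.
by rewrite exchange_big.
Qed.

Lemma mJ0_entry d lam (i j : 'I_d) : mJ lam None i j = (i == j)%:R.
Proof. by rewrite /mJ mxE. Qed.

Lemma tensor_J0 n d lam (y x : basis_idx n d) :
  tensor_op (fun k => mJ lam ((J0 n d) k)) y x = (y == x)%:R.
Proof.
rewrite /tensor_op; under eq_bigr do rewrite ffunE mJ0_entry.
have [<-|nyx] := eqVneq y x; first by rewrite big1 // => k _; rewrite eqxx.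
have [k yk] : exists k, y k != x k.
  by apply/existsP; apply: contraR nyx => /existsPn H; apply/eqP/ffunP => k; apply/eqP; move: (H k); rewrite negbK.
by rewrite (bigD1 k) //= (negbTE yk) mul0r.
Qed.

Lemma tJ_J0 n d lam (rho : op n d) : tJ lam rho (J0 n d) = \sum_x rho x x.
Proof.
rewrite /tJ /tr_mul; apply: eq_bigr => x _.
rewrite (bigD1 x) //= big1 ?addr0; first by rewrite tensor_J0 eqxx mulr1.
by move=> y nyx; rewrite tensor_J0 (negbTE nyx) mulr0.
Qed.

Lemma mJ_herm d (lam : 'I_(d ^ 2 - 1) -> 'M[algC]_d) o i j :
  gm_basis lam -> mJ lam o j i = (mJ lam o i j)^*.
Proof.
case=> H _ _; case: o => [a|] /=; first exact: H.
by rewrite !mxE conjC_nat eq_sym.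
Qed.

Lemma tensor_herm n d lam (J : Jt n d) x y : gm_basis lam ->
  tensor_op (fun k => mJ lam (J k)) x y = (tensor_op (fun k => mJ lam (J k)) y x)^*.
Proof.
move=> g; rewrite /tensor_op rmorph_prod; apply: eq_bigr => k _.
exact: mJ_herm.
Qed.

Lemma tJ_real n d lam (rho : op n d) J : gm_basis lam ->
  (forall x y, rho y x = (rho x y)^*) -> tJ lam rho J \is Num.real.
Proof.
move=> g Hr; rewrite CrealE; apply/eqP.
rewrite /tJ /tr_mul rmorph_sum exchange_big /=; apply: eq_bigr => y _.
rewrite rmorph_sum; apply: eq_bigr => x _.
by rewrite rmorphM /= -Hr -tensor_herm.
Qed.

Definition pst n d (phi chi : basis_idx n d -> algC) : op n d :=
  fun x y => (phi x * chi x) * (phi y * chi y)^*.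

Lemma pst_herm n d (phi chi : basis_idx n d -> algC) x y :
  pst phi chi y x = (pst phi chi x y)^*.
Proof. by rewrite /pst [RHS]rmorphM /= conjCK mulrC. Qed.

Lemma pst_J0 n d lam (phi chi : basis_idx n d -> algC) :
  \sum_x `|phi x * chi x| ^+ 2 = 1 -> tJ lam (pst phi chi) (J0 n d) = 1.
Proof.
move=> Hn; rewrite tJ_J0 -Hn; apply: eq_bigr => x _.
by rewrite /pst normCK.
Qed.

Definition SF n d lam S (phi : basis_idx n d -> algC) (J : Jt n d) : algC :=
  \sum_(p : basis_idx n d * basis_idx n d) phi p.1 * (phi p.2)^* * prodS lam S J p.2 p.1.

Definition NN n d : algC := #|{: basis_idx n d * basis_idx n d}|%:R.

Lemma fact_tJ n d lam S (phi chi : basis_idx n d -> algC) J :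
  depends_only_on S phi -> depends_only_on (~: S) chi ->
  NN n d * tJ lam (pst phi chi) J = SF lam S phi J * SF lam (~: S) chi J.
Proof.
move=> Hp Hc.
rewrite /SF (@merge_sum _ (pmrg S)); last 3 first.
- exact: pmrgK.
- by move=> [p1 p2] [q1 q2]; rewrite /pmrg /= !(mrg_dep _ _ Hp) prodS_mrg.
- by move=> [p1 p2] [q1 q2]; rewrite /pmrg /= !(mrg_depC _ _ Hc) prodS_mrgC.
rewrite /NN; congr (_ * _); rewrite /tJ tr_pair; apply: eq_bigr => p _.
rewrite (tensor_split _ S) /pst rmorphM /=; ring.
Qed.

Lemma prodS_Jm n d lam S (J J' : Jt n d) y x :
  prodS lam S (mrg S J J') y x = prodS lam S J y x.
Proof. by apply: eq_bigr => k kS; rewrite ffunE kS. Qed.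

Lemma prodS_JmC n d lam S (J J' : Jt n d) y x :
  prodS lam (~: S) (mrg S J J') y x = prodS lam (~: S) J' y x.
Proof. by apply: eq_bigr => k; rewrite in_setC ffunE => /negbTE ->. Qed.

Lemma NN_neq0 n d : (0 < d)%N -> NN n d != 0.
Proof.
move=> d0; rewrite /NN pnatr_eq0 -lt0n card_prod muln_gt0 card_ffun card_ord expn_gt0 d0 //.
Qed.

Lemma tJ_fact n d lam S (phi chi : basis_idx n d -> algC) J : (0 < d)%N ->
  depends_only_on S phi -> depends_only_on (~: S) chi ->
  \sum_x `|phi x * chi x| ^+ 2 = 1 ->
  tJ lam (pst phi chi) J =
    tJ lam (pst phi chi) (mrg S J (J0 n d)) * tJ lam (pst phi chi) (mrg (~: S) J (J0 n d)).
Proof.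
move=> d0 Hp Hc Hn.
have N0 := NN_neq0 n d0.
have e0 := fact_tJ lam (J0 n d) Hp Hc.
rewrite (pst_J0 lam Hn) mulr1 in e0.
have e1 := fact_tJ lam J Hp Hc.
have e2 := fact_tJ lam (mrg S J (J0 n d)) Hp Hc.
have e3 := fact_tJ lam (mrg (~: S) J (J0 n d)) Hp Hc.
have a1 : SF lam S phi (mrg S J (J0 n d)) = SF lam S phi J.
  by apply: eq_bigr => p _; rewrite prodS_Jm.
have a2 : SF lam (~: S) chi (mrg S J (J0 n d)) = SF lam (~: S) chi (J0 n d).
  by apply: eq_bigr => p _; rewrite prodS_JmC.
have a3 : SF lam (~: S) chi (mrg (~: S) J (J0 n d)) = SF lam (~: S) chi J.
  by apply: eq_bigr => p _; rewrite prodS_Jm.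
have a4 : SF lam S phi (mrg (~: S) J (J0 n d)) = SF lam S phi (J0 n d).
  apply: eq_bigr => p _; congr (_ * _).
  by apply: eq_bigr => k kS; rewrite ffunE in_setC kS.
rewrite a1 a2 in e2; rewrite a3 a4 in e3.
apply: (mulfI N0); apply: (mulfI N0).
have -> : forall a b c : algC, a * (a * (b * c)) = (a * b) * (a * c) by move=> *; ring.
by rewrite e2 e3 e1 e0; ring.
Qed.

Lemma sum2_prod (n d : nat) (h : 'I_n -> 'I_d -> 'I_d -> algC) :
  \sum_(x : basis_idx n d) \sum_(y : basis_idx n d) \prod_k h k (x k) (y k)
  = \prod_k \sum_a \sum_b h k a b.
Proof.
rewrite (bigA_distr_bigA (fun k a => \sum_b h k a b)).
apply: eq_bigr => x _.
by rewrite (bigA_distr_bigA (fun k b => h k (x k) b)).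
Qed.

Lemma sumS_prod n d (S : {set 'I_n}) (h : 'I_n -> 'I_d -> 'I_d -> algC) :
  \sum_(p : basis_idx n d * basis_idx n d) \prod_(k in S) h k (p.2 k) (p.1 k)
  = \prod_k (if k \in S then \sum_a \sum_b h k b a else d%:R * d%:R).
Proof.
rewrite -(pair_bigA _ (fun x y : basis_idx n d => \prod_(k in S) h k (y k) (x k))) /=.
transitivity (\sum_(x : basis_idx n d) \sum_(y : basis_idx n d)
   \prod_k (if k \in S then h k (y k) (x k) else 1)).
  by apply: eq_bigr => x _; apply: eq_bigr => y _; rewrite big_mkcond.
rewrite (sum2_prod (fun k a b => if k \in S then h k b a else 1)).
apply: eq_bigr => k _; case: (k \in S) => //.
by rewrite !sumr_const card_ord -mulr_natl mulr1 mulr_natl.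
Qed.

Lemma trace_pair d (lam : 'I_(d ^ 2 - 1) -> 'M[algC]_d) o o' : gm_basis lam ->
  \sum_a \sum_b mJ lam o b a * (mJ lam o' b a)^* = d%:R * (o == o')%:R.
Proof.
move=> g.
transitivity (\tr (mJ lam o *m mJ lam o')).
  rewrite /mxtrace exchange_big; apply: eq_bigr => b _; rewrite mxE.
  by apply: eq_bigr => a _; rewrite -mJ_herm.
case: g => _ Ht Hd.
case: o => [a|]; case: o' => [b|] /=.
- by rewrite Hd.
- by rewrite mulmx1 Ht mulr0.
- by rewrite mul1mx Ht mulr0.
- by rewrite mulmx1 mxtrace1 mulr1.
Qed.

Definition EE n d (S : {set 'I_n}) : algC := \prod_(k < n) (if k \in S then d%:R else d%:R * d%:R).
Arguments EE n d S : clear implicits.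

Lemma EE_gt0 n d S : (0 < d)%N -> 0 < EE n d S.
Proof.
move=> d0; apply: prodr_gt0 => k _.
have dp : (0 : algC) < d%:R by rewrite ltr0n.
by case: (k \in S) => //; rewrite mulr_gt0.
Qed.

Lemma NN_EE n d (S : {set 'I_n}) : NN n d = d%:R ^+ #|S| * EE n d S.
Proof.
rewrite /NN /EE card_prod card_ffun !card_ord natrM natrX.
transitivity (\prod_(k < n) (d%:R * d%:R : algC)); first by rewrite prodr_const card_ord exprMn.
transitivity (\prod_(k < n) ((if k \in S then d%:R else 1) * (if k \in S then d%:R else d%:R * d%:R) : algC)).
  by apply: eq_bigr => k _; case: (k \in S); rewrite ?mul1r.
rewrite big_split /=; congr (_ * _).
by rewrite -big_mkcond prodr_const.
Qed.

Lemma ffun_neq (n : nat) (A : finType) (f g : {ffun 'I_n -> A}) : f != g -> exists k, f k != g k.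
Proof.
move=> nfg; apply/existsP; apply: contraR nfg => /existsPn H.
by apply/eqP/ffunP => k; apply/eqP; move: (H k); rewrite negbK.
Qed.

Lemma Q_val n d lam (S : {set 'I_n}) (J J' : Jt n d) : gm_basis lam ->
  mrg S J (J0 n d) = J -> mrg S J' (J0 n d) = J' ->
  \sum_(p : basis_idx n d * basis_idx n d) prodS lam S J p.2 p.1 * (prodS lam S J' p.2 p.1)^*
  = EE n d S * (J == J')%:R.
Proof.
move=> g HJ HJ'.
transitivity (\sum_(p : basis_idx n d * basis_idx n d)
   \prod_(k in S) (mJ lam (J k) (p.2 k) (p.1 k) * (mJ lam (J' k) (p.2 k) (p.1 k))^*)).
  by apply: eq_bigr => p _; rewrite /prodS rmorph_prod -big_split.
rewrite (sumS_prod S (fun k (b a : 'I_d) => mJ lam (J k) b a * (mJ lam (J' k) b a)^*)).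
under eq_bigr do (rewrite trace_pair //).
have [<-|nJ] := eqVneq J J'.
  rewrite mulr1; apply: eq_bigr => k _; by rewrite eqxx mulr1.
rewrite mulr0; have [k nk] := ffun_neq nJ.
have kS : k \in S.
  apply: contraR nk => kS; rewrite -HJ -HJ' !ffunE (negbTE kS) //.
by rewrite (bigD1 k) //= kS (negbTE nk) mulr0 mul0r.
Qed.

Lemma tJ0_pair n d lam (w : basis_idx n d -> basis_idx n d -> algC) :
  \sum_(p : basis_idx n d * basis_idx n d) w p.1 p.2 * tensor_op (fun k => mJ lam ((J0 n d) k)) p.2 p.1
  = \sum_x w x x.
Proof. by rewrite -tr_pair -(tJ_J0 lam). Qed.

Lemma SF0_val n d lam (S : {set 'I_n}) (chi : basis_idx n d -> algC) :
  depends_only_on (~: S) chi ->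
  EE n d S * SF lam (~: S) chi (J0 n d) = NN n d * \sum_x chi x * (chi x)^*.
Proof.
move=> Hc.
have -> : EE n d S = \sum_(p : basis_idx n d * basis_idx n d) prodS lam S (J0 n d) p.2 p.1.
  rewrite /prodS (sumS_prod S (fun k (b a : 'I_d) => mJ lam ((J0 n d) k) b a)); apply: eq_bigr => k _; case: (k \in S) => //.
  under eq_bigr do under eq_bigr do rewrite ffunE mJ0_entry.
  rewrite (eq_bigr (fun _ => 1)); first by rewrite sumr_const card_ord.
  by move=> a _; rewrite (bigD1 a) //= eqxx big1 ?addr0 // => b /negbTE ->.
rewrite /SF (@merge_sum _ (pmrg S)); last 3 first.
- exact: pmrgK.
- by move=> [p1 p2] [q1 q2]; rewrite /pmrg /= prodS_mrg.
- by move=> [p1 p2] [q1 q2]; rewrite /pmrg /= !(mrg_depC _ _ Hc) prodS_mrgC.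
rewrite /NN; congr (_ * _).
rewrite -(tJ0_pair lam (fun x y => chi x * (chi y)^*)); apply: eq_bigr => p _.
by rewrite (tensor_split _ S); ring.
Qed.

Lemma B1 n d lam (S : {set 'I_n}) (phi chi : basis_idx n d -> algC) :
  (0 < d)%N -> gm_basis lam -> depends_only_on S phi -> depends_only_on (~: S) chi ->
  \sum_x `|phi x * chi x| ^+ 2 = 1 ->
  \sum_(J : Jt n d | mrg S J (J0 n d) == J) tJ lam (pst phi chi) J ^+ 2 <= d%:R ^+ #|S|.
Proof.
move=> d0 g Hp Hc Hn.
set T2 := (basis_idx n d * basis_idx n d)%type.
set S2 := \sum_x chi x * (chi x)^*.
have S2ge0 : 0 <= S2 by apply: sumr_ge0 => x _; rewrite -normCK exprn_ge0.
have S2pos : 0 < S2.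
  rewrite lt_def S2ge0 andbT; apply/negP => /eqP S20.
  have c0 : forall x, chi x = 0.
    move=> x; have : chi x * (chi x)^* == 0.
      move/eqP: S20; rewrite psumr_eq0 => [/allP /(_ x (mem_index_enum _)) //|y _].
      by rewrite -normCK exprn_ge0.
    by rewrite mulf_eq0 conjC_eq0 orbb => /eqP.
  move: Hn; rewrite big1 => [/eqP|x _]; first by rewrite eq_sym oner_eq0.
  by rewrite c0 mulr0 normr0 expr0n.
have N0 := NN_neq0 n d0.
have Npos : 0 < NN n d by rewrite lt_def N0 /NN ler0n.
have Epos := @EE_gt0 n d S d0.
set H := fun p : T2 => chi p.1 * (chi p.1)^* * (chi p.2 * (chi p.2)^*).
have SH : \sum_(p : T2) H p = S2 * S2.
  by rewrite /S2 big_distrlr /= pair_bigA.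
have Hdep : forall p q : T2, H (pmrg S p q) = H q.
  by move=> [p1 p2] [q1 q2]; rewrite /H /pmrg /= !(mrg_depC _ _ Hc).
set b := fun (J : Jt n d) (p : T2) => (prodS lam S J p.2 p.1)^* * chi p.1 * (chi p.2)^*.
set r := fun p : T2 => pst phi chi p.1 p.2.
set c := EE n d S * (S2 * S2) / NN n d.
have hb : forall J J', mrg S J (J0 n d) == J -> mrg S J' (J0 n d) == J' ->
    \sum_p (b J p)^* * b J' p = c * (J == J')%:R.
  move=> J J' /eqP HJ /eqP HJ'.
  apply: (mulfI N0).
  transitivity ((\sum_(p : T2) prodS lam S J p.2 p.1 * (prodS lam S J' p.2 p.1)^*) * \sum_(p : T2) H p).
    rewrite (@merge_sum _ (pmrg S)); last 3 first.
    - exact: pmrgK.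
    - by move=> [p1 p2] [q1 q2]; rewrite /pmrg /= !prodS_mrg.
    - exact: Hdep.
    congr (_ * _); apply: eq_bigr => p _; rewrite /b /H.
    rewrite !rmorphM /= !conjCK; ring.
  rewrite Q_val // SH /c; field; exact: N0.
have hr : forall J, NN n d * \sum_p (b J p)^* * r p = SF lam S phi J * (S2 * S2).
  move=> J; rewrite -SH /SF (@merge_sum _ (pmrg S)); last 3 first.
  - exact: pmrgK.
  - by move=> [p1 p2] [q1 q2]; rewrite /pmrg /= !(mrg_dep _ _ Hp) !prodS_mrg.
  - exact: Hdep.
  congr (_ * _); apply: eq_bigr => p _; rewrite /b /H /r /pst.
  rewrite !rmorphM /= !conjCK; ring.
have ht : forall J, mrg S J (J0 n d) == J ->
    NN n d * tJ lam (pst phi chi) J = SF lam S phi J * SF lam (~: S) chi (J0 n d).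
  move=> J /eqP HJ; rewrite (fact_tJ lam J Hp Hc); congr (_ * _).
  by rewrite -{1}HJ; apply: eq_bigr => p _; rewrite prodS_JmC.
have hS0 := SF0_val lam Hc.
have Hbes := @bessel T2 (Jt n d) (fun J => mrg S J (J0 n d) == J) b r c.
have rn : \sum_p `|r p| ^+ 2 = 1.
  rewrite -[RHS](expr1n _ 2) -Hn expr2 big_distrlr /= pair_bigA /=.
  apply: eq_bigr => p _; rewrite /r /pst normrM norm_conjC; ring.
have cpos : 0 < c by rewrite /c divr_gt0 // mulr_gt0 // mulr_gt0.
move: (Hbes cpos hb); rewrite rn mulr1 => Hb.
set K := NN n d / (EE n d S * S2).
have Kpos : 0 < K by rewrite /K divr_gt0 // mulr_gt0.
have E0 : EE n d S != 0 by rewrite lt0r_neq0.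
have S20 : S2 != 0 by rewrite lt0r_neq0.
have key : forall J, mrg S J (J0 n d) == J ->
    tJ lam (pst phi chi) J ^+ 2 = K ^+ 2 * `|\sum_p (b J p)^* * r p| ^+ 2.
  move=> J PJ.
  have e : tJ lam (pst phi chi) J = K * \sum_p (b J p)^* * r p.
    have e1 : tJ lam (pst phi chi) J = SF lam S phi J * SF lam (~: S) chi (J0 n d) / NN n d.
      by rewrite -ht //; field.
    have e2 : \sum_p (b J p)^* * r p = SF lam S phi J * (S2 * S2) / NN n d.
      by rewrite -hr; field.
    have e3 : SF lam (~: S) chi (J0 n d) = NN n d * S2 / EE n d S.
      by rewrite -hS0; field.
    by rewrite e1 e2 e3 /K; field; rewrite E0 S20 N0.
  rewrite -real_normK; last exact: tJ_real g (@pst_herm _ _ phi chi).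
  by rewrite e normrM exprMn ger0_norm // ltW.
rewrite (eq_bigr _ key) -big_distrr /=.
apply: le_trans (ler_wpM2l (exprn_ge0 2 (ltW Kpos)) Hb) _.
have -> : K ^+ 2 * c = d%:R ^+ #|S|.
  rewrite /K /c (@NN_EE n d S); field; rewrite E0 S20 /=.
  by rewrite expf_neq0 // pnatr_eq0 -lt0n.
by [].
Qed.

Definition supp n d (J : Jt n d) : {set 'I_n} := [set k | J k != None].

Lemma mrg_mrgL n (A : finType) (S : {set 'I_n}) (s u z : {ffun 'I_n -> A}) :
  mrg S (mrg S s u) z = mrg S s z.
Proof. by apply/ffunP => k; rewrite !ffunE; case: (k \in S). Qed.

Lemma mrg_mrgR n (A : finType) (S : {set 'I_n}) (s u z : {ffun 'I_n -> A}) :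
  mrg (~: S) (mrg S s u) z = mrg (~: S) u z.
Proof. by apply/ffunP => k; rewrite !ffunE in_setC; case: (k \in S). Qed.

Lemma split_sum n d (S : {set 'I_n}) (F : Jt n d -> algC) :
  \sum_(J : Jt n d) F J = \sum_(s : Jt n d | mrg S s (J0 n d) == s)
     \sum_(u : Jt n d | mrg (~: S) u (J0 n d) == u) F (mrg S s u).
Proof.
rewrite pair_big_dep /=.
rewrite (reindex_onto (fun p : Jt n d * Jt n d => mrg S p.1 p.2)
   (fun J => (mrg S J (J0 n d), mrg (~: S) J (J0 n d)))) /=.
  apply: eq_bigl => [[s u]] /=.
  by rewrite mrg_mrgL mrg_mrgR xpair_eqE.
move=> J _; apply/ffunP => k; rewrite !ffunE in_setC.
by case: (k \in S).
Qed.

Lemma tJ_mrg n d lam (S : {set 'I_n}) (phi chi : basis_idx n d -> algC) (s u : Jt n d) :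
  (0 < d)%N -> depends_only_on S phi -> depends_only_on (~: S) chi ->
  \sum_x `|phi x * chi x| ^+ 2 = 1 ->
  mrg S s (J0 n d) == s -> mrg (~: S) u (J0 n d) == u ->
  tJ lam (pst phi chi) (mrg S s u) = tJ lam (pst phi chi) s * tJ lam (pst phi chi) u.
Proof.
move=> d0 Hp Hc Hn /eqP Hs /eqP Hu.
by rewrite (tJ_fact lam _ d0 Hp Hc Hn) mrg_mrgL mrg_mrgR Hs Hu.
Qed.

Lemma tJ_swap n d lam (phi chi : basis_idx n d -> algC) J :
  tJ lam (pst chi phi) J = tJ lam (pst phi chi) J.
Proof.
rewrite /tJ /tr_mul; apply: eq_bigr => x _; apply: eq_bigr => y _.
by rewrite /pst (mulrC (chi x)) (mulrC (chi y)).
Qed.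

Lemma supp_sub n d (S : {set 'I_n}) (u : Jt n d) :
  mrg (~: S) u (J0 n d) == u -> (#|supp u| <= #|~: S|)%N.
Proof.
move=> /eqP Hu; apply: subset_leq_card; apply/subsetP => k.
rewrite inE => uk; apply: contraR uk => kS.
by rewrite -Hu !ffunE (negbTE kS) eqxx.
Qed.

Lemma supp_J0 n d : supp (J0 n d) = set0.
Proof. by apply/setP => k; rewrite !inE ffunE eqxx. Qed.

Lemma sum_if (I : finType) (P : pred I) (b : bool) (F : I -> algC) :
  \sum_(i | P i) (if b then F i else 0) = if b then \sum_(i | P i) F i else 0.
Proof. by case: b => //; rewrite big1. Qed.

Lemma fin_ineq (a b A B : algC) (i1 i2 : bool) : a <= A -> b <= B -> a * b <= A * B ->
  (if i2 then b else 0) + ((if i1 then a else 0) + a * b) <=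
  A * B + (if i1 then A else 0) + (if i2 then B else 0).
Proof.
move=> ha hb hab.
have -> : A * B + (if i1 then A else 0) + (if i2 then B else 0) =
  (if i2 then B else 0) + ((if i1 then A else 0) + A * B) by ring.
apply: lerD; first by case: i2.
by apply: lerD => //; case: i1.
Qed.

Lemma pure_bound n d lam (beta : {set 'I_n}) (phi chi : basis_idx n d -> algC) (x : int) :
  (0 < d)%N -> gm_basis lam -> depends_only_on beta phi -> depends_only_on (~: beta) chi ->
  \sum_x `|phi x * chi x| ^+ 2 = 1 ->
  \sum_(J : Jt n d | (supp J != set0) && (x <= (#|supp J|)%:Z)%R) tJ lam (pst phi chi) J ^+ 2 <=
    ((d%:R ^+ #|beta| - 1) * (d%:R ^+ #|setC beta| - 1)
     + (if (x <= (#|beta|)%:Z)%R then d%:R ^+ #|beta| - 1 else 0)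
     + (if (x <= (#|setC beta|)%:Z)%R then d%:R ^+ #|setC beta| - 1 else 0) : algC).
Proof.
move=> d0 g Hp Hc Hn.
set t := tJ lam (pst phi chi).
set Pb := fun s : Jt n d => mrg beta s (J0 n d) == s.
set Pc := fun u : Jt n d => mrg (~: beta) u (J0 n d) == u.
set P0 := fun J : Jt n d => (supp J != set0) && (x <= (#|supp J|)%:Z)%R.
have tR : forall J, t J \is Num.real by move=> J; apply: tJ_real g (@pst_herm _ _ phi chi).
have a0 : forall J, 0 <= t J ^+ 2 by move=> J; rewrite -realEsqr.
have t0 : t (J0 n d) = 1 by apply: pst_J0.
have PbJ0 : Pb (J0 n d) by apply/eqP/ffunP => k; rewrite !ffunE; case: (k \in beta).
have PcJ0 : Pc (J0 n d) by apply/eqP/ffunP => k; rewrite !ffunE; case: (k \in ~: beta).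
have A1 : \sum_(s | Pb s) t s ^+ 2 <= d%:R ^+ #|beta| by apply: B1.
have B1' : \sum_(u | Pc u) t u ^+ 2 <= d%:R ^+ #|~: beta|.
  rewrite /t -(eq_bigr _ (fun J _ => congr1 (fun z => z ^+ 2) (tJ_swap lam phi chi J))).
  apply: B1 => //; first by rewrite setCK.
  by rewrite -Hn; apply: eq_bigr => y _; rewrite mulrC.
set A' := \sum_(s | Pb s && (s != J0 n d)) t s ^+ 2.
set B' := \sum_(u | Pc u && (u != J0 n d)) t u ^+ 2.
have hA : A' <= d%:R ^+ #|beta| - 1.
  by rewrite lerBrDl; move: A1; rewrite (bigD1 (J0 n d)) //= t0 expr1n.
have hB : B' <= d%:R ^+ #|~: beta| - 1.
  by rewrite lerBrDl; move: B1'; rewrite (bigD1 (J0 n d)) //= t0 expr1n.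
have A'0 : 0 <= A' by apply: sumr_ge0.
have B'0 : 0 <= B' by apply: sumr_ge0.
rewrite big_mkcond (split_sum beta) /=.
set G := fun s u : Jt n d => if P0 (mrg beta s u) then t s ^+ 2 * t u ^+ 2 else 0.
have eG : forall s u, Pb s -> Pc u ->
    (if P0 (mrg beta s u) then t (mrg beta s u) ^+ 2 else 0) = G s u.
  by move=> s u Hs Hu; rewrite /G /t (tJ_mrg lam d0 Hp Hc Hn Hs Hu) exprMn.
rewrite (eq_bigr (fun s => \sum_(u | Pc u) G s u)); last first.
  by move=> s Hs; apply: eq_bigr => u Hu; apply: eG.
have G0 : forall s u, 0 <= G s u.
  by move=> s u; rewrite /G; case: ifP => // _; rewrite mulr_ge0.
have g00 : G (J0 n d) (J0 n d) = 0.
  rewrite /G (_ : mrg beta (J0 n d) (J0 n d) = J0 n d); last first.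
    by apply/ffunP => k; rewrite !ffunE; case: (k \in beta).
  by rewrite /P0 supp_J0 eqxx.
have g0u : forall u, Pc u -> G (J0 n d) u <= if (x <= (#|~: beta|)%:Z)%R then t u ^+ 2 else 0.
  move=> u Hu.
  have me : mrg beta (J0 n d) u = u.
    apply/ffunP => k; move/eqP: (Hu) => Hu'.
    have := congr1 (fun f : Jt n d => f k) Hu'; rewrite !ffunE in_setC.
    by case: (k \in beta) => //= <-.
  rewrite /G me t0 expr1n mul1r; case: ifP => P0u.
    have -> : (x <= (#|~: beta|)%:Z)%R.
      by case/andP: P0u => _ h; apply: le_trans h _; rewrite lez_nat supp_sub.
    by [].
  by case: ifP.
have gs0 : forall s, Pb s -> G s (J0 n d) <= if (x <= (#|beta|)%:Z)%R then t s ^+ 2 else 0.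
  move=> s Hs.
  have me : mrg beta s (J0 n d) = s by apply/eqP.
  rewrite /G me t0 expr1n mulr1; case: ifP => P0s.
    have -> : (x <= (#|beta|)%:Z)%R.
      case/andP: P0s => _ h; apply: le_trans h _; rewrite lez_nat.
      by have := @supp_sub n d (~: beta) s; rewrite setCK; apply.
    by [].
  by case: ifP.
have gsu : forall s u, G s u <= t s ^+ 2 * t u ^+ 2.
  by move=> s u; rewrite /G; case: ifP => // _; rewrite mulr_ge0.
rewrite (bigD1 (J0 n d)) //=.
have h1 : \sum_(u | Pc u) G (J0 n d) u <= if (x <= (#|~: beta|)%:Z)%R then B' else 0.
  rewrite (bigD1 (J0 n d)) //= g00 add0r /B' -sum_if; apply: ler_sum => u /andP[Hu _].
  exact: g0u.
have h2 : \sum_(s | Pb s && (s != J0 n d)) \sum_(u | Pc u) G s u <=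
    (if (x <= (#|beta|)%:Z)%R then A' else 0) + A' * B'.
  rewrite /A' big_distrl /= -sum_if -big_split /=; apply: ler_sum => s /andP[Hs _].
  rewrite (bigD1 (J0 n d)) //=; apply: lerD; first exact: gs0.
  rewrite /B' big_distrr /=; apply: ler_sum => u _; exact: gsu.
apply: le_trans (lerD h1 h2) _.
by apply: fin_ineq => //; apply: ler_pM.
Qed.

Definition emb n d (alpha : {set 'I_n})
  (i : {ffun {k : 'I_n | k \in alpha} -> 'I_(d ^ 2 - 1)}) : Jt n d :=
  [ffun k => if (insub k : option {k : 'I_n | k \in alpha}) is Some k' then Some (i k') else None].

Definition back n d (a0 : 'I_(d ^ 2 - 1)) (alpha : {set 'I_n}) (J : Jt n d) :
  {ffun {k : 'I_n | k \in alpha} -> 'I_(d ^ 2 - 1)} :=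
  [ffun k' => odflt a0 (J (val k'))].

Lemma Cx_J n d lam (x : int) (rho : op n d) (a0 : 'I_(d ^ 2 - 1)) :
  Cx lam x rho = \sum_(J : Jt n d | (supp J != set0) && (x <= (#|supp J|)%:Z)%R) tJ lam rho J ^+ 2.
Proof.
rewrite (partition_big (@supp n d) (fun a : {set 'I_n} => (a != set0) && (x <= (#|a|)%:Z)%R)) /=;
  last by [].
apply: eq_bigr => alpha Pa.
rewrite (eq_bigl (fun J => supp J == alpha)); last first.
  by move=> J; have [->|_] := eqVneq (supp J) alpha; rewrite ?Pa ?andbF.
rewrite (reindex_onto (@emb n d alpha) (back a0 alpha)); last first.
  move=> J /eqP sJ; apply/ffunP => k; rewrite ffunE.
  case: insubP => [k' ka kk|ka].
    rewrite ffunE /= kk; move: ka; rewrite -sJ inE.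
    by case: (J k).
  by move: ka; rewrite -sJ inE negbK => /eqP.
rewrite /tau_norm2 (eq_bigl xpredT); last first.
  move=> i /=; apply/andP; split.
    apply/eqP/setP => k; rewrite inE ffunE.
    by case: insubP => [k' -> _|/negbTE ->].
  apply/eqP/ffunP => k'; rewrite !ffunE valK //.
apply: eq_bigr => i _; congr (_ ^+ 2).
rewrite /tJ /tr_mul; apply: eq_bigr => y _; apply: eq_bigr => z _; congr (_ * _).
rewrite /tensor_op; apply: eq_bigr => k _.
by rewrite /site_op ffunE; case: insub.
Qed.

Unset Implicit Arguments.

Theorem theorem2 (n d : nat) (lam : 'I_(d ^ 2 - 1) -> 'M[algC]_d)
  (beta : {set 'I_n}) (x : int) (rho : op n d) :
  (2 <= n)%N -> (2 <= d)%N -> gm_basis lam ->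
  beta != set0 -> setC beta != set0 ->
  separable_bip beta rho ->
  Cx lam x rho <=
    ((d%:R ^+ #|beta| - 1) * (d%:R ^+ #|setC beta| - 1)
     + (if (x <= (#|beta|)%:Z)%R then d%:R ^+ #|beta| - 1 else 0)
     + (if (x <= (#|setC beta|)%:Z)%R then d%:R ^+ #|setC beta| - 1 else 0) : algC).
Proof.
move=> _ d2 g _ _ [m [p [phi [chi [[p0 p1] Hp Hc Hn Hr]]]]].
have d0 : (0 < d)%N by apply: ltnW.
have ha : (0 < d ^ 2 - 1)%N.
  by rewrite subn_gt0 expnS expn1; apply: leq_trans d2 (leq_pmulr _ d0).
rewrite (Cx_J _ _ _ (Ordinal ha)).
set R := (X in _ <= X).
have tsum : forall J, tJ lam rho J = \sum_j p j * tJ lam (pst (phi j) (chi j)) J.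
  move=> J; rewrite /tJ /tr_mul.
  set A := tensor_op _.
  transitivity (\sum_x \sum_y \sum_j p j * (pst (phi j) (chi j) x y * A y x)).
    apply: eq_bigr => y _; apply: eq_bigr => z _; rewrite Hr big_distrl /=.
    by apply: eq_bigr => j _; rewrite /pst; ring.
  under eq_bigr do rewrite exchange_big /=.
  rewrite exchange_big /=; apply: eq_bigr => j _.
  by rewrite big_distrr /=; apply: eq_bigr => y _; rewrite big_distrr.
have tR : forall j J, tJ lam (pst (phi j) (chi j)) J \is Num.real.
  by move=> j J; apply: tJ_real g (@pst_herm _ _ (phi j) (chi j)).
apply: le_trans (_ : \sum_(J | (supp J != set0) && (x <= (#|supp J|)%:Z)%R)
    \sum_j p j * tJ lam (pst (phi j) (chi j)) J ^+ 2 <= R).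
  apply: ler_sum => J _; rewrite tsum; exact: jensen.
rewrite exchange_big /=.
apply: le_trans (_ : \sum_j p j * R <= R); last by rewrite -big_distrl /= p1 mul1r.
apply: ler_sum => j _; rewrite -big_distrr /=; apply: ler_wpM2l => //.
by apply: pure_bound.
Qed.
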